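(* Let $S>0$, $\zeta\in\{0,1\}$, $\phi\in(-1,1)$, and let $(u_n)_{n\in\mathbb{N}}$ be the $\phi$-market impact scenario defined below. Then there exists $R>0$ such that for all $x\in(-R,R)$ the scenario starting from $x$ is regular, i.e. $N(x)=+\infty$, where $N(x):=\inf\{n\in\mathbb{N}: s_n(x)=-S\}$ with $\inf\emptyset=+\infty$.
   Context: Fix $S>0$, $\zeta\in\{0,1\}$ and $\phi\in\mathbb{R}$. For $a,b\in\mathbb{R}$ write $a\vee b=\max(a,b)$. The $\phi$-market impact scenario starting from $x\in\mathbb{R}$ is the sequence of real-valued functions $(u_n)_{n\in\mathbb{N}}$ defined by $u_0(x)=x\vee(-S)$ and, for all $n\in\mathbb{N}$, $u_{n+1}(x)=\Big(\phi\big(1+\tfrac{s_n(x)}{S}\big)^{1+\zeta}u_n(x)\Big)\vee\big(-s_n(x)-S\big)$, where $s_n(x)=\sum_{k=0}^n u_k(x)$. *)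

(* Defs.v *)
From Stdlib Require Import Reals.
Open Scope R_scope.

Fixpoint scen (S : R) (zeta : nat) (phi : R) (x : R) (n : nat) : R * R :=
  match n with
  | O => let u0 := Rmax x (- S) in (u0, u0)
  | Datatypes.S m =>
      let (um, sm) := scen S zeta phi x m in
      let un := Rmax (phi * (1 + sm / S) ^ (1 + zeta) * um) (- sm - S) in
      (un, sm + un)
  end.

Definition u (S : R) (zeta : nat) (phi : R) (x : R) (n : nat) : R :=
  fst (scen S zeta phi x n).

Definition s (S : R) (zeta : nat) (phi : R) (x : R) (n : nat) : R :=
  snd (scen S zeta phi x n).

Definition regular (S : R) (zeta : nat) (phi : R) (x : R) : Prop :=
  forall n : nat, s S zeta phi x n <> - S.

(* Main.v *)
Require Import Defs.
From Stdlib Require Import Reals Lra Psatz.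
Open Scope R_scope.

Lemma scen_S S z phi x n :
  scen S z phi x (Datatypes.S n) =
  (Rmax (phi * (1 + snd (scen S z phi x n) / S) ^ (1 + z) * fst (scen S z phi x n))
        (- snd (scen S z phi x n) - S),
   snd (scen S z phi x n) +
   Rmax (phi * (1 + snd (scen S z phi x n) / S) ^ (1 + z) * fst (scen S z phi x n))
        (- snd (scen S z phi x n) - S)).
Proof. simpl. destruct (scen S z phi x n); reflexivity. Qed.

Lemma nabs_le (y : R) : - Rabs y <= y.
Proof. unfold Rabs; destruct (Rcase_abs y); lra. Qed.

Theorem proposition4p3 (S : R) (zeta : nat) (phi : R)
  (hS : 0 < S) (hzeta : zeta = 0%nat \/ zeta = 1%nat) (hphi : -1 < phi < 1) :
  exists R0 : R, 0 < R0 /\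
    forall x : R, - R0 < x < R0 -> regular S zeta phi x.
Proof.
  set (c := (1 - Rabs phi) / 6).
  set (q := (1 + Rabs phi) / 2).
  assert (Hp0 : 0 <= Rabs phi) by apply Rabs_pos.
  assert (Hp1 : Rabs phi < 1) by (apply Rabs_def1; lra).
  assert (Hc : 0 < c) by (unfold c; lra).
  assert (Hc6 : c <= 1/6) by (unfold c; lra).
  assert (Hq : 1 - q = 3 * c) by (unfold q, c; lra).
  assert (Hq0 : 0 <= q) by (unfold q; lra).
  assert (Hpq : Rabs phi * (1 + 3 * c) <= q) by (unfold q, c; nra).
  exists (3 * c * c * S). split. { apply Rmult_lt_0_compat; nra. }
  intros x Hx.
  assert (Hax : Rabs x < 3 * c * c * S) by (apply Rabs_def1; lra).
  assert (Inv : forall n, (1 - q) * Rabs (snd (scen S zeta phi x n))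
                 + q * Rabs (fst (scen S zeta phi x n)) <= Rabs x
                 /\ Rabs (snd (scen S zeta phi x n)) < c * S).
  { assert (Hbnd : forall a, (1 - q) * Rabs a <= Rabs x -> Rabs a < c * S).
    { intros a Ha. rewrite Hq in Ha. assert (Rabs a * (3 * c) < c * S * (3*c)) by nra. nra. }
    induction n as [|n [IH1 IH2]].
    - simpl. assert (Rmax x (-S) = x).
      { apply Rmax_left. assert (Hx2 : - Rabs x <= x) by (apply nabs_le).
        assert (c * c <= 1 / 36) by nra. assert (c * c * S <= S / 36) by nra. lra. }
      rewrite H. split; [lra|]. apply Hbnd. assert (0 <= Rabs x) by apply Rabs_pos. nra.
    - rewrite scen_S. cbn [fst snd].
      set (a := snd (scen S zeta phi x n)) in *.
      set (b := fst (scen S zeta phi x n)) in *.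
      set (f := phi * (1 + a / S) ^ (1 + zeta) * b).
      assert (Ht : Rabs (a / S) <= c).
      { unfold Rdiv. rewrite Rabs_mult, Rabs_inv, (Rabs_right S) by lra.
        apply (Rmult_le_reg_r S); [lra|]. field_simplify; lra. }
      assert (Ht' : - c <= a / S <= c) by (unfold Rabs in Ht; destruct (Rcase_abs (a/S)); lra).
      assert (Hpow : Rabs ((1 + a / S) ^ (1 + zeta)) <= 1 + 3 * c).
      { rewrite Rabs_right.
        - destruct hzeta as [-> | ->]; simpl; nra.
        - apply Rle_ge. apply pow_le. lra. }
      assert (Hf : Rabs f <= q * Rabs b).
      { unfold f. rewrite !Rabs_mult.
        assert (0 <= Rabs b) by apply Rabs_pos.
        assert (0 <= Rabs ((1 + a / S) ^ (1 + zeta))) by apply Rabs_pos.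
        assert (Rabs phi * Rabs ((1 + a / S) ^ (1 + zeta)) <= q).
        { apply Rle_trans with (Rabs phi * (1 + 3 * c)); [|exact Hpq].
          apply Rmult_le_compat_l; lra. }
        apply Rmult_le_compat_r; lra. }
      assert (Hb : q * Rabs b <= Rabs x).
      { assert (0 <= Rabs a) by apply Rabs_pos. nra. }
      assert (Hfl : - Rabs f <= f) by (apply nabs_le).
      assert (Ha : - Rabs a <= a) by (apply nabs_le).
      assert (Hm : Rmax f (- a - S) = f).
      { apply Rmax_left. nra. }
      rewrite Hm.
      assert (Hs : Rabs (a + f) <= Rabs a + Rabs f) by apply Rabs_triang.
      assert (Hi : (1 - q) * Rabs (a + f) + q * Rabs f <= Rabs x) by nra.
      split; [exact Hi|]. apply Hbnd.
      assert (0 <= Rabs f) by apply Rabs_pos. nra. }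
  intros n Hn. destruct (Inv n) as [_ H]. unfold s in Hn. rewrite Hn in H.
  rewrite Rabs_Ropp, Rabs_right in H by lra. nra.
Qed.
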